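(* For every odd integer $g\geqslant3$, the ideal $J_g^+\subset\mathbb{C}[\alpha,\gamma]$ is generated by $\zeta_g^+$ together with $\gamma J_{g-2}^+$. Moreover, $\gamma^i\zeta^+_{g-2i}\in J_g^+$ for all integers $i\geqslant0$.
   Context: $\zeta_k^+\in\mathbb{C}[\alpha,\gamma]$: $\zeta^+_i=0$ for $i<0$, $\zeta^+_0=1$, $\zeta^+_{k+1}=\alpha\zeta^+_k+16k^2\zeta^+_{k-1}+2k(k-1)\gamma\zeta^+_{k-2}$ for $k$ even and $\zeta^+_{k+1}=\alpha\zeta^+_k+2k(k-1)\gamma\zeta^+_{k-2}$ for $k$ odd ($k\geqslant0$) (the specialization at $\beta=8$ of $\zeta_{k+1}=\alpha\zeta_k+k^2(\beta+(-1)^k8)\zeta_{k-1}+2k(k-1)\gamma\zeta_{k-2}$); $J^+_k=(\zeta^+_k,\zeta^+_{k+1},\zeta^+_{k+2})$. *)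

(* Defs.v *)
From mathcomp Require Import all_boot all_algebra complex.
From mathcomp Require Import Rstruct.
Set Implicit Arguments. Unset Strict Implicit. Unset Printing Implicit Defensive.
Import GRing.Theory.
Local Open Scope ring_scope.

Definition Cx := complex Rdefinitions.R.

(* C[alpha, gamma] as {poly {poly C}}: alpha is the outer variable,
   gamma the inner one. *)
Definition P := {poly {poly Cx}}.
Definition alpha : P := 'X.
Definition gamma : P := ('X)%:P.

(* zt k = (zeta^+_{k-2}, zeta^+_{k-1}, zeta^+_k), with zeta^+_i = 0 for i < 0.
   Recurrence (beta = 8):
   zeta_{k+1} = alpha zeta_k + [k even] 16 k^2 zeta_{k-1} + 2k(k-1) gamma zeta_{k-2}. *)
Fixpoint zt (k : nat) : P * P * P :=
  match k with
  | 0 => (0, 0, 1)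
  | k'.+1 =>
      let: (a, b, c) := zt k' in
      (b, c, alpha * c + (if odd k' then 0 else (16 * k' ^ 2)%N%:R * b)
                + (2 * k' * (k' - 1))%N%:R * gamma * a)
  end.

Definition zeta (k : nat) : P := (zt k).2.

Definition zetaZ (k : int) : P :=
  match k with Posz n => zeta n | Negz _ => 0 end.

(* generators of J^+_k = (zeta_k, zeta_{k+1}, zeta_{k+2}) *)
Definition Jgens (k : nat) : seq P := [:: zeta k; zeta k.+1; zeta k.+2].

Definition in_ideal (R : comNzRingType) (s : seq R) (x : R) : Prop :=
  exists c : seq R, size c = size s /\ x = \sum_(i < size s) c`_i * s`_i.

(* Main.v *)
Require Import Defs.
From mathcomp Require Import all_boot all_algebra complex ring zify.
From mathcomp Require Import Rstruct.
Import ComplexField.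
Import GRing.Theory Num.Theory.
Local Open Scope ring_scope.

Lemma in3 (R : comNzRingType) (a b c x : R) :
  in_ideal [:: a; b; c] x <-> exists u v w, x = u * a + v * b + w * c.
Proof.
split.
  move=> [cs [Hs ->]]; case: cs Hs => [|u [|v [|w [|]]]] //= _.
  by exists u, v, w; rewrite !big_ord_recl big_ord0 /= addr0 addrA.
move=> [u [v [w ->]]]; exists [:: u; v; w]; split => //.
by rewrite !big_ord_recl big_ord0 /= addr0 addrA.
Qed.

Lemma in4 (R : comNzRingType) (a b c d x : R) :
  in_ideal [:: a; b; c; d] x <-> exists u v w t, x = u * a + v * b + w * c + t * d.
Proof.
split.
  move=> [cs [Hs ->]]; case: cs Hs => [|u [|v [|w [|t [|]]]]] //= _.
  by exists u, v, w, t; rewrite !big_ord_recl big_ord0 /= addr0 !addrA.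
move=> [u [v [w [t ->]]]]; exists [:: u; v; w; t]; split => //.
by rewrite !big_ord_recl big_ord0 /= addr0 !addrA.
Qed.

Lemma zetaS k : zeta k.+3 = alpha * zeta k.+2 +
   (if odd k.+2 then 0 else (16 * k.+2 ^ 2)%N%:R * zeta k.+1)
   + (2 * k.+2 * (k.+2 - 1))%N%:R * gamma * zeta k.
Proof. by rewrite /zeta /=; case: (zt k) => [[a b] c]. Qed.

Definition inv (n : nat) : P := ((n%:R : complex Rdefinitions.R)^-1)%:P%:P.

Lemma invK n : (0 < n)%N -> inv n * n%:R = 1.
Proof.
move=> hn.
have -> : (n%:R : P) = ((n%:R : complex Rdefinitions.R)%:P)%:P by rewrite !rmorph_nat.
rewrite /inv -!polyCM mulVf //.
by rewrite pnatr_eq0 -lt0n.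
Qed.

Lemma gen (R : comNzRingType) (zg z1 z2 Y1 Y2 G al A B C iA iC x : R) :
  iA * A = 1 -> iC * C = 1 ->
  z1 = al * zg + A * Y1 -> z2 = al * z1 + B * zg + C * Y2 ->
  (exists u v w, x = u * zg + v * z1 + w * z2) <->
  (exists a b c d, x = a * zg + b * Y1 + c * Y2 + d * (G * zg)).
Proof.
move=> hA hC h1 h2; split.
  move=> [u [v [w ->]]]; rewrite h2 h1.
  exists (u + v * al + w * al * al + w * B), (v * A + w * al * A), (w * C), 0.
  ring.
move=> [a [b [c [d ->]]]].
have hY1 : Y1 = iA * (z1 - al * zg).
  by rewrite -[Y1]mul1r -hA h1; ring.
have hY2 : Y2 = iC * (z2 - al * z1 - B * zg).
  by rewrite -[Y2]mul1r -hC h2; ring.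
rewrite hY1 hY2.
exists (a - b * iA * al - c * iC * B + d * G), (b * iA - c * iC * al), (c * iC).
ring.
Qed.

Lemma part1 k : ~~ odd k -> forall x : P,
  in_ideal (Jgens k.+3) x <->
  in_ideal [:: zeta k.+3; gamma * zeta k.+1; gamma * zeta k.+2; gamma * zeta k.+3] x.
Proof.
move=> ek x; rewrite /Jgens in3 in4.
apply: (@gen _ _ _ _ _ _ _ _ _ _ _ (inv (2 * k.+3 * (k.+3 - 1))) (inv (2 * k.+4 * (k.+4 - 1)))).
- by apply: invK; rewrite !muln_gt0.
- by apply: invK; rewrite !muln_gt0.
- by rewrite zetaS /= negbK ek /= addr0 mulrA.
- by rewrite [zeta k.+1.+4]zetaS /= !negbK (negbTE ek) mulrA.
Qed.

Lemma zetaZP (n : nat) : zetaZ n = zeta n. Proof. by []. Qed.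
Lemma zetaZN (n : nat) : zetaZ (Negz n) = 0. Proof. by []. Qed.

Lemma in3_first (R : comNzRingType) (a b c : R) : in_ideal [:: a; b; c] (1 * a).
Proof. by apply/in3; exists 1, 0, 0; ring. Qed.

Lemma in3_zero (R : comNzRingType) (a b c : R) : in_ideal [:: a; b; c] 0.
Proof. by apply/in3; exists 0, 0, 0; ring. Qed.

Lemma in_step (R : comNzRingType) (a b c G a' y : R) :
  in_ideal [:: a; b; c] y ->
  in_ideal [:: a'; G * a; G * b; G * c] (G * y).
Proof.
move=> /in3 [u [v [w ->]]]; apply/in4; exists 0, u, v, w; ring.
Qed.

Lemma claim m : forall i : nat,
  in_ideal (Jgens (m.*2).+1) (gamma ^+ i * zetaZ ((m.*2).+1%:Z - (2 * i)%N%:Z)).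
Proof.
elim: m => [|m IH] i.
  case: i => [|i].
    by rewrite muln0 subr0 expr0 zetaZP; apply: in3_first.
  have -> : (1%:Z - (2 * i.+1)%N%:Z) = Negz (2 * i) by rewrite NegzE; lia.
  by rewrite zetaZN mulr0; apply: in3_zero.
rewrite doubleS.
case: i => [|i].
  by rewrite muln0 subr0 expr0 zetaZP; apply: in3_first.
have -> : ((m.*2).+3%:Z - (2 * i.+1)%N%:Z) = ((m.*2).+1%:Z - (2 * i)%N%:Z).
  by rewrite -mul2n; lia.
have ek : ~~ odd m.*2 by rewrite odd_double.
have H := (@part1 _ ek (gamma ^+ i.+1 * zetaZ (m.*2.+1%:Z - (2 * i)%N%:Z))).2.
refine (H _).
rewrite exprS -mulrA; apply: in_step; exact: IH.
Qed.

Theorem lemma5p8 (g : nat) : odd g -> (3 <= g)%N ->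
  (forall x : P,
     in_ideal (Jgens g) x <->
     in_ideal (zeta g :: [seq gamma * y | y <- Jgens (g - 2)]) x)
  /\ (forall i : nat,
        in_ideal (Jgens g) (gamma ^+ i * zetaZ (g%:Z - (2 * i)%N%:Z))).
Proof.
move=> og g3.
have hg : g = (g./2).*2.+1 by rewrite -{1}(odd_double_half g) og.
split; last by move=> i; rewrite hg; apply: claim.
case: g og g3 hg => [|[|[|k]]] // og _ _ x.
have ek : ~~ odd k by move: og; rewrite /= !negbK.
have -> : (k.+3 - 2 = k.+1)%N by rewrite !subSS subn0.
exact: (@part1 _ ek).
Qed.
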